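(* Let $V$ be a real sequence with $\liminf_{n\to\infty}V_n>C>0$, and let $G_{jk}=\psi^+_{\min(j,k)}\psi^-_{\max(j,k)}$ be a Green matrix for $(-\Delta+V)\psi=0$, where $\psi^-$ is a nonzero solution square-summable at infinity and $\psi^+$ is a solution with $\psi^-_n\psi^+_{n+1}-\psi^-_{n+1}\psi^+_n=1$. Define $$K_A:=\sqrt{1+\left(\frac{2}{C(C+2)}\right)^2}+\frac{2}{C(C+2)}.$$ Then for $n$ sufficiently large, $$\frac{1}{V_n+2}\le G_{nn}\le\frac{K_A}{V_n+2},$$ and consequently, with $z_n=\sqrt{G_{nn}}$ and $S^{[z]}_n=\frac{1+\sqrt{1+4z_n^2z_{n-1}^2}}{2z_nz_{n-1}}$, $$\frac{\sqrt{(V_n+2)(V_{n-1}+2)}+\sqrt{4+(V_n+2)(V_{n-1}+2)}}{2K_A}\le S^{[z]}_n\le\frac{\sqrt{(V_n+2)(V_{n-1}+2)}+\sqrt{4+(V_n+2)(V_{n-1}+2)}}{2}.$$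
   Context: $(\Delta f)_n=f_{n+1}+f_{n-1}-2f_n$; $(-\Delta+V)\psi=0$ means $-\psi_{n+1}-\psi_{n-1}+(2+V_n)\psi_n=0$. *)

(* Defs.v *)
From Stdlib Require Import Reals Lra.
From Coquelicot Require Import Coquelicot.
Open Scope R_scope.

Definition is_solution (V psi : nat -> R) : Prop :=
  forall n : nat, (1 <= n)%nat ->
    - psi (S n) - psi (n - 1)%nat + (2 + V n) * psi n = 0.

Definition green (psip psim : nat -> R) (j k : nat) : R :=
  psip (Nat.min j k) * psim (Nat.max j k).

Definition K_A (C : R) : R :=
  sqrt (1 + (2 / (C * (C + 2))) ^ 2) + 2 / (C * (C + 2)).

Definition zseq (psip psim : nat -> R) (n : nat) : R := sqrt (green psip psim n n).

Definition Sz (psip psim : nat -> R) (n : nat) : R :=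
  let z := zseq psip psim n in
  let z' := zseq psip psim (n - 1)%nat in
  (1 + sqrt (1 + 4 * z ^ 2 * z' ^ 2)) / (2 * z * z').

(* Main.v *)
Require Import Defs.
From Stdlib Require Import Reals Lra Lia Classical.
From Coquelicot Require Import Coquelicot.
Open Scope R_scope.

Lemma ev_V (V : nat -> R) (C : R) :
  Rbar_lt (Finite C) (LimInf_seq V) -> exists N, forall n, (N <= n)%nat -> C < V n.
Proof.
  intros H. destruct (ex_LimInf_seq V) as [l Hl].
  rewrite (is_LimInf_seq_unique _ _ Hl) in H.
  destruct l as [l| |]; simpl in *.
  - assert (He : 0 < l - C) by lra.
    destruct (Hl (mkposreal _ He)) as [_ [N HN]].
    exists N; intros n Hn; specialize (HN n Hn); simpl in HN; lra.
  - destruct (Hl C) as [N HN]; exists N; auto.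
  - contradiction.
Qed.

Lemma sq_small (u : nat -> R) : is_lim_seq u 0 -> forall e, 0 < e ->
  exists N, forall n, (N <= n)%nat -> u n < e.
Proof.
  intros H e He. apply is_lim_seq_spec in H.
  destruct (H (mkposreal _ He)) as [N HN]. exists N; intros n Hn.
  specialize (HN n Hn); simpl in HN. rewrite Rminus_0_r in HN.
  apply Rabs_def2 in HN. lra.
Qed.

Lemma sol_opp V psi : is_solution V psi -> is_solution V (fun n => - psi n).
Proof. unfold is_solution; intros H n Hn; specialize (H n Hn); lra. Qed.

Lemma growth V psi C N0 m : 0 < C -> (forall n, (N0 <= n)%nat -> C < V n) ->
  (1 <= N0)%nat -> is_solution V psi -> (N0 <= m)%nat ->
  0 < psi (S m) -> psi m <= psi (S m) ->
  forall k, psi (S m) <= psi (S (m + k)%nat) /\ psi (m + k)%nat <= psi (S (m + k)%nat).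
Proof.
  intros HC HV H1 Hs Hm Hp Hle k. induction k as [|k IH].
  - rewrite Nat.add_0_r; lra.
  - destruct IH as [IH1 IH2].
    assert (E := Hs (S (m + k)%nat) ltac:(lia)).
    replace (S (m + k)%nat - 1)%nat with (m + k)%nat in E by lia.
    replace (m + S k)%nat with (S (m + k)%nat) by lia.
    assert (HVk := HV (S (m + k)%nat) ltac:(lia)).
    assert (psi (S (S (m + k)%nat)) = (2 + V (S (m + k)%nat)) * psi (S (m + k)%nat) - psi (m + k)%nat) by lra.
    split; nra.
Qed.

Lemma no_growth V psi C N0 m : 0 < C -> (forall n, (N0 <= n)%nat -> C < V n) ->
  (1 <= N0)%nat -> is_solution V psi -> is_lim_seq (fun n => psi n ^ 2) 0 ->
  (N0 <= m)%nat -> 0 < psi (S m) -> psi (S m) < psi m.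
Proof.
  intros HC HV H1 Hs Hl Hm Hp.
  destruct (Rlt_le_dec (psi (S m)) (psi m)) as [h|h]; [exact h|exfalso].
  destruct (sq_small _ Hl (psi (S m) ^ 2) ltac:(nra)) as [N HN].
  destruct (growth V psi C N0 m HC HV H1 Hs Hm Hp h N) as [G1 _].
  specialize (HN (S (m + N)%nat) ltac:(lia)). simpl in HN. nra.
Qed.

Lemma pos_case V psi C N0 : 0 < C -> (forall n, (N0 <= n)%nat -> C < V n) ->
  (1 <= N0)%nat -> is_solution V psi -> is_lim_seq (fun n => psi n ^ 2) 0 ->
  (forall n, psi n <> 0 \/ psi (S n) <> 0) ->
  0 < psi (S N0) -> forall n, (S N0 <= n)%nat -> 0 < psi (S n) < psi n.
Proof.
  intros HC HV H1 Hs Hl Hz Hp.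
  assert (Hneg : forall m, (N0 <= m)%nat -> psi (S m) < 0 -> psi m < psi (S m)).
  { intros m Hm Hq.
    assert (Hl' : is_lim_seq (fun n => (- psi n) ^ 2) 0).
    { eapply is_lim_seq_ext; [|exact Hl]. intros n; simpl; ring. }
    assert (X := no_growth V (fun n => - psi n) C N0 m HC HV H1 (sol_opp _ _ Hs) Hl' Hm ltac:(lra)).
    lra. }
  assert (Hnz : forall m, (N0 <= m)%nat -> psi (S m) <> 0).
  { intros m Hm Hq.
    assert (E := Hs (S m) ltac:(lia)). replace (S m - 1)%nat with m in E by lia.
    rewrite Hq in E.
    destruct (Hz m) as [Hm0|Hm0]; [|contradiction].
    destruct (Rlt_le_dec 0 (psi m)) as [h|h].
    - assert (X := Hneg (S m) ltac:(lia) ltac:(lra)). lra.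
    - assert (X := no_growth V psi C N0 (S m) HC HV H1 Hs Hl ltac:(lia) ltac:(lra)). lra. }
  assert (Hall : forall k, 0 < psi (S N0 + k)%nat).
  { induction k as [|k IH]. rewrite Nat.add_0_r; exact Hp.
    replace (S N0 + S k)%nat with (S (S N0 + k)) by lia.
    assert (X := Hnz (S N0 + k)%nat ltac:(lia)).
    destruct (Rlt_le_dec (psi (S (S N0 + k)%nat)) 0) as [h|h].
    - assert (Y := Hneg (S N0 + k)%nat ltac:(lia) h). lra.
    - lra. }
  intros n Hn. replace n with (S N0 + (n - S N0))%nat by lia.
  assert (X := Hall (S (n - S N0))). replace (S N0 + S (n - S N0))%nat with (S (S N0 + (n - S N0))) in X by lia.
  split; [exact X|].
  apply (no_growth V psi C N0); auto; lia.
Qed.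


Lemma KA_ge C : 0 < C -> 1 + 2 / (C * (C + 3)) <= K_A C.
Proof.
  intros HC. unfold K_A.
  assert (1 <= sqrt (1 + (2 / (C * (C + 2))) ^ 2)).
  { apply Rle_trans with (sqrt 1); [rewrite sqrt_1; lra|]. apply sqrt_le_1_alt. assert (0 <= (2 / (C * (C + 2))) ^ 2) by (apply pow2_ge_0). lra. }
  assert (2 / (C * (C + 3)) <= 2 / (C * (C + 2))).
  { unfold Rdiv. apply Rmult_le_compat_l; [lra|]. apply Rinv_le_contravar; nra. }
  lra.
Qed.

Lemma key (C v p m p' m'' : R) : 0 < C -> C < v -> 0 < p -> 0 < m -> 0 <= p' -> 0 <= m'' ->
  (1 + C) * p' <= p -> (1 + C) * m'' <= m ->
  (v + 2) * (p * m) = 1 + p * m'' + m * p' ->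
  1 <= (v + 2) * (p * m) /\ (v + 2) * (p * m) <= K_A C.
Proof.
  intros HC Hv Hp Hm Hp' Hm'' H1 H2 E.
  set (x := (v + 2) * (p * m)) in *.
  assert (1 <= x) by nra.
  assert (Hb : (1 + C) * (x - 1) <= 2 * (p * m)) by nra.
  assert (Hc : (x - 1) * ((1 + C) * (v + 2) - 2) <= 2).
  { assert ((x - 1) * ((1 + C) * (v + 2) - 2) = (1+C)*(x-1)*(v+2) - 2 * (x - 1)) by ring.
    assert ((1+C)*(x-1)*(v+2) <= 2 * (p*m) * (v+2)) by nra.
    unfold x in *. nra. }
  assert (Hd : (x - 1) * (C * (C + 3)) <= 2) by nra.
  assert (x - 1 <= 2 / (C * (C + 3))).
  { apply Rle_div_r; nra. }
  assert (X := KA_ge C HC). lra.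
Qed.

Lemma sq_le a b : 0 <= b -> a ^ 2 <= b ^ 2 -> a <= b.
Proof. intros Hb H. destruct (Rle_lt_dec a b); [auto|nra]. Qed.

Lemma szbound (a b G G' K : R) : 0 < a -> 0 < b -> 1 <= a * G <= K -> 1 <= b * G' <= K ->
  (sqrt (a * b) + sqrt (4 + a * b)) / (2 * K) <=
  (1 + sqrt (1 + 4 * sqrt G ^ 2 * sqrt G' ^ 2)) / (2 * sqrt G * sqrt G') <=
  (sqrt (a * b) + sqrt (4 + a * b)) / 2.
Proof.
  intros Ha Hb [H1 H2] [H3 H4].
  assert (HG : 0 < G) by nra. assert (HG' : 0 < G') by nra.
  assert (Hz : 0 < sqrt G) by (apply sqrt_lt_R0; lra).
  assert (Hz' : 0 < sqrt G') by (apply sqrt_lt_R0; lra).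
  assert (Ez : sqrt G ^ 2 = G) by (apply pow2_sqrt; lra).
  assert (Ez' : sqrt G' ^ 2 = G') by (apply pow2_sqrt; lra).
  set (z := sqrt G) in *. set (z' := sqrt G') in *.
  assert (HA : 0 <= sqrt (a * b)) by apply sqrt_pos.
  assert (EA : sqrt (a * b) ^ 2 = a * b) by (apply pow2_sqrt; nra).
  assert (HB : 0 <= sqrt (4 + a * b)) by apply sqrt_pos.
  assert (EB : sqrt (4 + a * b) ^ 2 = 4 + a * b) by (apply pow2_sqrt; nra).
  assert (HS : 0 <= sqrt (1 + 4 * z ^ 2 * z' ^ 2)) by apply sqrt_pos.
  assert (ES : sqrt (1 + 4 * z ^ 2 * z' ^ 2) ^ 2 = 1 + 4 * z ^ 2 * z' ^ 2)
    by (apply pow2_sqrt; nra).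
  set (A := sqrt (a * b)) in *. set (B := sqrt (4 + a * b)) in *.
  set (S := sqrt (1 + 4 * z ^ 2 * z' ^ 2)) in *.
  set (s := z * z').
  assert (Hs : 0 < s) by (unfold s; nra).
  assert (Es : s ^ 2 * (a * b) = (a * G) * (b * G')) by (unfold s; rewrite <- Ez, <- Ez'; ring).
  assert (EsS : S ^ 2 = 1 + 4 * s ^ 2) by (rewrite ES; unfold s; ring).
  assert (K1 : 1 <= K) by lra.
  assert (Pm1 : 1 <= (a * G) * (b * G')) by nra.
  assert (Pm2 : (a * G) * (b * G') <= K * K) by nra.
  assert (U1 : 1 <= A * s).
  { apply sq_le; [nra|]. replace ((A * s) ^ 2) with (s ^ 2 * A ^ 2) by ring. rewrite EA, Es. lra. }
  assert (U2 : S <= B * s).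
  { apply sq_le; [nra|]. replace ((B * s) ^ 2) with (B ^ 2 * s ^ 2) by ring. rewrite EB, EsS. nra. }
  assert (L1 : A * s <= K).
  { apply sq_le; [lra|]. replace ((A * s) ^ 2) with (s ^ 2 * A ^ 2) by ring. rewrite EA, Es. nra. }
  assert (L2 : B * s <= K * S).
  { apply sq_le; [nra|]. replace ((B * s) ^ 2) with (B ^ 2 * s ^ 2) by ring.
    replace ((K * S) ^ 2) with (K ^ 2 * S ^ 2) by ring. rewrite EB, EsS. nra. }
  replace (2 * z * z') with (2 * s) by (unfold s; ring).
  split.
  - assert (E : (1 + S) / (2 * s) - (A + B) / (2 * K) = ((1 + S) * K - (A + B) * s) / (2 * K * s))
      by (field; lra).
    assert (0 <= ((1 + S) * K - (A + B) * s) / (2 * K * s)) by (apply Rdiv_le_0_compat; nra).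
    lra.
  - assert (E : (A + B) / 2 - (1 + S) / (2 * s) = ((A + B) * s - (1 + S)) / (2 * s))
      by (field; lra).
    assert (0 <= ((A + B) * s - (1 + S)) / (2 * s)) by (apply Rdiv_le_0_compat; nra).
    lra.
Qed.


Lemma core V pp pm C N1 : 0 < C -> (1 <= N1)%nat -> (forall n, (N1 <= n)%nat -> C < V n) ->
  is_solution V pm -> is_solution V pp ->
  (forall n : nat, pm n * pp (S n) - pm (S n) * pp n = 1) ->
  is_lim_seq (fun n => pm n ^ 2) 0 ->
  (forall n, (N1 <= n)%nat -> 0 < pm (S n) < pm n) ->
  exists N, forall i, (N <= i)%nat ->
    1 <= (V i + 2) * (pp i * pm i) /\ (V i + 2) * (pp i * pm i) <= K_A C.
Proof.
  intros HC H1 HV Hsm Hsp HW Hl Hdec.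
  assert (Hpos : forall n, (N1 <= n)%nat -> 0 < pm n).
  { intros n Hn; destruct (Hdec n Hn); lra. }
  assert (B0 : forall k, pm (N1 + k)%nat <= pm N1).
  { induction k. rewrite Nat.add_0_r; lra.
    replace (N1 + S k)%nat with (S (N1 + k)) by lia.
    destruct (Hdec (N1 + k)%nat ltac:(lia)); lra. }
  set (c := pm N1 ^ 2).
  assert (Hc : 0 < c) by (unfold c; assert (X := Hpos N1 (le_n _)); nra).
  set (u := fun n => pp n / pm n).
  assert (B1 : forall j, u N1 + INR j / c <= u (N1 + j)%nat).
  { induction j. rewrite Nat.add_0_r; simpl; unfold Rdiv; lra.
    replace (N1 + S j)%nat with (S (N1 + j)) by lia.
    assert (X1 := Hpos (N1 + j)%nat ltac:(lia)).
    assert (X2 := Hpos (S (N1 + j)) ltac:(lia)).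
    assert (X3 := B0 j). assert (X4 := Hdec (N1 + j)%nat ltac:(lia)).
    assert (E : u (S (N1 + j)) = u (N1 + j)%nat + / (pm (N1 + j)%nat * pm (S (N1 + j)))).
    { unfold u. specialize (HW (N1 + j)%nat).
      set (a := pm (N1 + j)%nat) in *. set (b := pm (S (N1 + j))) in *.
      set (x := pp (N1 + j)%nat) in *. set (y := pp (S (N1 + j))) in *.
      assert (Ey : y = (1 + b * x) * / a) by (rewrite <- HW; field; lra).
      rewrite Ey. field. lra. }
    assert (/ c <= / (pm (N1 + j)%nat * pm (S (N1 + j)))).
    { apply Rinv_le_contravar; [nra|]. unfold c. nra. }
    rewrite S_INR. unfold Rdiv in *. lra. }
  destruct (INR_unbounded (- u N1 * c)) as [k Hk].
  set (N2 := (N1 + k)%nat).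
  assert (Hpp : forall n, (N2 <= n)%nat -> 0 < pp n).
  { intros n Hn. assert (X := B1 (n - N1)%nat). replace (N1 + (n - N1))%nat with n in X by lia.
    assert (INR k <= INR (n - N1)) by (apply le_INR; lia).
    assert (u N1 + INR k / c > 0).
    { assert (INR k / c > - u N1) by (apply Rlt_gt, Rlt_div_r; lra). lra. }
    assert (INR k / c <= INR (n - N1) / c) by (unfold Rdiv; apply Rmult_le_compat_r; [apply Rlt_le, Rinv_0_lt_compat; lra| lra]).
    assert (Hu : 0 < u n) by lra. unfold u in Hu.
    assert (X2 := Hpos n ltac:(lia)).
    replace (pp n) with (pp n / pm n * pm n) by (field; lra). nra. }
  assert (B2 : exists m, (N2 <= m)%nat /\ pp m <= pp (S m)).
  { apply NNPP; intro Hn.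
    assert (Hd : forall m, (N2 <= m)%nat -> pp (S m) < pp m).
    { intros m Hm. apply Rnot_le_lt. intro h. apply Hn. exists m; auto. }
    assert (Bd : forall k, pp (N2 + k)%nat <= pp N2).
    { induction k0. rewrite Nat.add_0_r; lra.
      replace (N2 + S k0)%nat with (S (N2 + k0)) by lia.
      assert (X := Hd (N2 + k0)%nat ltac:(lia)). lra. }
    set (B := pp N2).
    assert (HB : 0 < B) by (apply Hpp; lia).
    destruct (sq_small _ Hl (/ B ^ 2) ltac:(apply Rinv_0_lt_compat; nra)) as [N HN].
    set (n := (N + N2)%nat).
    specialize (HN n ltac:(unfold n; lia)).
    assert (X1 := HW n). assert (X2 := Bd (S (N + 0))%nat).
    replace (N2 + S (N + 0))%nat with (S n) in X2 by (unfold n; lia).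
    assert (X3 := Hpp n ltac:(unfold n; lia)).
    assert (X4 := Hpos n ltac:(unfold n; lia)).
    assert (X5 := Hpos (S n) ltac:(unfold n; lia)).
    fold B in X2. assert (1 <= pm n * B) by (assert (pm n * pp (S n) <= pm n * B) by (apply Rmult_le_compat_l; lra); assert (0 < pm (S n) * pp n) by (apply Rmult_lt_0_compat; lra); lra).
    assert (Hm : / B <= pm n).
    { assert (0 < / B) by (apply Rinv_0_lt_compat; lra). apply Rle_trans with (/ B * (pm n * B)). nra. right; field; lra. }
    assert (/ B ^ 2 <= pm n ^ 2).
    { replace (/ B ^ 2) with ((/ B) ^ 2) by (field; lra).
      assert (0 < / B) by (apply Rinv_0_lt_compat; lra). nra. }
    lra. }
  destruct B2 as [m [Hm Hmm]].
  assert (Gr := growth V pp C N1 m HC HV H1 Hsp ltac:(lia) ltac:(apply Hpp; lia) Hmm).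
  assert (Rp : forall i, (S (S m) <= i)%nat -> 0 <= pp (i - 1)%nat /\ (1 + C) * pp (i - 1)%nat <= pp i).
  { intros i Hi. destruct i as [|[|j]]; try lia.
    replace (S (S j) - 1)%nat with (S j) by lia.
    destruct (Gr (j - m)%nat) as [_ G2]. replace (m + (j - m))%nat with j in G2 by lia.
    assert (E := Hsp (S j) ltac:(lia)). replace (S j - 1)%nat with j in E by lia.
    assert (X := HV (S j) ltac:(lia)). assert (X2 := Hpp (S j) ltac:(lia)).
    split; nra. }
  assert (Rm : forall i, (N1 <= i)%nat -> 0 <= pm (S i) /\ (1 + C) * pm (S i) <= pm i).
  { intros i Hi. assert (E := Hsm (S i) ltac:(lia)). replace (S i - 1)%nat with i in E by lia.
    assert (X := HV (S i) ltac:(lia)). assert (X2 := Hdec (S i) ltac:(lia)).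
    assert (X3 := Hdec i Hi). split; nra. }
  exists (S (S (m + N1))). intros i Hi.
  destruct (Rp i ltac:(lia)) as [Rp1 Rp2]. destruct (Rm i ltac:(lia)) as [Rm1 Rm2].
  apply (key C (V i) (pp i) (pm i) (pp (i - 1)%nat) (pm (S i))); auto.
  - apply HV; lia.
  - apply Hpp; lia.
  - apply Hpos; lia.
  - assert (E := Hsm i ltac:(lia)). assert (W := HW (i - 1)%nat).
    replace (S (i - 1)) with i in W by lia. nra.
Qed.


Lemma green_diag pp pm n : green pp pm n n = pp n * pm n.
Proof. unfold green; rewrite Nat.min_id, Nat.max_id; reflexivity. Qed.

Lemma finish V pp pm C N0 N : 0 < C -> (forall n, (N0 <= n)%nat -> C < V n) ->
  (forall i, (N <= i)%nat -> 1 <= (V i + 2) * (pp i * pm i) /\ (V i + 2) * (pp i * pm i) <= K_A C) ->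
  exists N : nat, forall n : nat, (N <= n)%nat ->
    1 / (V n + 2) <= green pp pm n n <= K_A C / (V n + 2) /\
    (sqrt ((V n + 2) * (V (n - 1)%nat + 2)) + sqrt (4 + (V n + 2) * (V (n - 1)%nat + 2)))
      / (2 * K_A C) <= Sz pp pm n <=
    (sqrt ((V n + 2) * (V (n - 1)%nat + 2)) + sqrt (4 + (V n + 2) * (V (n - 1)%nat + 2))) / 2.
Proof.
  intros HC HV Hc. exists (S (N + N0)). intros n Hn.
  assert (V1 := HV n ltac:(lia)). assert (V2 := HV (n - 1)%nat ltac:(lia)).
  assert (C1 := Hc n ltac:(lia)). assert (C2 := Hc (n - 1)%nat ltac:(lia)).
  split.
  - rewrite green_diag. split.
    + apply Rle_div_l; [lra|]. lra.
    + apply (Rle_div_r (pp n * pm n) (K_A C) (V n + 2)); [lra|rewrite Rmult_comm; lra].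
  - unfold Sz, zseq. cbv zeta. rewrite !green_diag.
    apply szbound; lra.
Qed.


Theorem lemma3 (V psip psim : nat -> R) (C : R) :
  0 < C ->
  Rbar_lt (Finite C) (LimInf_seq V) ->
  is_solution V psim ->
  (exists n, psim n <> 0) ->
  ex_series (fun n => (psim n) ^ 2) ->
  is_solution V psip ->
  (forall n : nat, psim n * psip (S n) - psim (S n) * psip n = 1) ->
  exists N : nat, forall n : nat, (N <= n)%nat ->
    1 / (V n + 2) <= green psip psim n n <= K_A C / (V n + 2) /\
    (sqrt ((V n + 2) * (V (n - 1)%nat + 2)) + sqrt (4 + (V n + 2) * (V (n - 1)%nat + 2)))
      / (2 * K_A C) <= Sz psip psim n <=
    (sqrt ((V n + 2) * (V (n - 1)%nat + 2)) + sqrt (4 + (V n + 2) * (V (n - 1)%nat + 2))) / 2.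
Proof.
  intros HC HL Hsm _ Hser Hsp HW.
  destruct (ev_V V C HL) as [N' HN'].
  set (N0 := S N').
  assert (HV : forall n, (N0 <= n)%nat -> C < V n) by (intros; apply HN'; unfold N0 in *; lia).
  assert (Hl := ex_series_lim_0 _ Hser).
  assert (Hz : forall n, psim n <> 0 \/ psim (S n) <> 0).
  { intros n. destruct (classic (psim n = 0)) as [h|h]; [|now left].
    right; intro h'. specialize (HW n). rewrite h, h' in HW. lra. }
  assert (HM : exists M, (N0 <= M)%nat /\ psim (S M) <> 0).
  { destruct (Hz (S N0)) as [h|h]; [exists N0|exists (S N0)]; split; auto. }
  destruct HM as [M [HM1 HM2]].
  assert (HV' : forall n, (M <= n)%nat -> C < V n) by (intros; apply HV; lia).
  assert (H1 : (1 <= M)%nat) by (unfold N0 in *; lia).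
  destruct (Rlt_le_dec 0 (psim (S M))) as [hp|hn].
  - assert (Hdec := pos_case V psim C M HC HV' H1 Hsm Hl Hz hp).
    destruct (core V psip psim C (S M) HC ltac:(lia) ltac:(intros; apply HV'; lia)
                   Hsm Hsp HW Hl Hdec) as [N HN].
    exact (finish V psip psim C M N HC HV' HN).
  - set (qm := fun n => - psim n). set (qp := fun n => - psip n).
    assert (Hl' : is_lim_seq (fun n => qm n ^ 2) 0).
    { eapply is_lim_seq_ext; [|exact Hl]. intros n; unfold qm; simpl; ring. }
    assert (Hz' : forall n, qm n <> 0 \/ qm (S n) <> 0).
    { intros n; unfold qm; destruct (Hz n); [left|right]; lra. }
    assert (Hdec := pos_case V qm C M HC HV' H1 (sol_opp _ _ Hsm) Hl' Hz'
                      ltac:(unfold qm; lra)).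
    assert (HW' : forall n, qm n * qp (S n) - qm (S n) * qp n = 1).
    { intros n; unfold qm, qp; rewrite <- (HW n); ring. }
    destruct (core V qp qm C (S M) HC ltac:(lia) ltac:(intros; apply HV'; lia)
                   (sol_opp _ _ Hsm) (sol_opp _ _ Hsp) HW' Hl' Hdec) as [N HN].
    apply (finish V psip psim C M N HC HV').
    intros i Hi. specialize (HN i Hi). unfold qp, qm in HN.
    replace (- psip i * - psim i) with (psip i * psim i) in HN by ring. exact HN.
Qed.
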